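(* Let $K,L,T,r$ be positive integers with $L\le K$ and $1\le r\le \min\{K,T\}$, and let $(\alpha,\beta)$ be the $\mathsf{GASP}_r$ exponent vectors (defined in the context). Then the number of distinct integers in the sumset $\operatorname{Set}(\alpha)+\operatorname{Set}(\beta)$ is \begin{multline*} N= KL+2K+3T-2 -\max\{K,\varphi\}+(L-2)\max\{0,\min\{r,r-\varphi\}\}+ \lfloor (T-1)/r \rfloor \min\{T-1,K-r\} \\ -\mathbf{1}_{\varphi < r}\Bigg(\min\{0,\mu-r\} +r(T-1-\mu)/K+\frac{-Kx^2 + (-K-2\max\{0,\varphi\}+2T-2)x+T-1-\mu}{2} -\frac{T-1-\mu}{K} \cdot \frac{T-1+\mu}{2}\Bigg), \end{multline*} where $\varphi = T-1-KL+2K$, $\mu$ is the integer with $0 \le \mu \le K-1$ and $\mu \equiv T-1 \pmod{K}$, and $x = \min\left\{ \frac{T-1-\mu}{K} -\mathbf{1}_{\mu=0}, L-3 \right\}$.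
   Context: For positive integers $K,L,T,r$ with $L\le K$ and $1\le r\le\min\{K,T\}$, the code $\mathsf{GASP}_r$ is given by the integer vectors $\alpha=(\alpha_{\mathrm p}\mid\alpha_{\mathrm s})$ and $\beta=(\beta_{\mathrm p}\mid\beta_{\mathrm s})$ (concatenations), where $\alpha_{\mathrm p}=(0,1,\ldots,K-1)$; $\alpha_{\mathrm s}$ is the vector of the $T$ smallest elements of the set $\{KL+j+Kt : 0\le j\le r-1,\ t\in\mathbb{Z}_{\ge 0}\}$ listed in increasing order, i.e. $(KL,KL+1,\ldots,KL+r-1,KL+K,\ldots,KL+K+r-1,\ldots)$ of length $T$; $\beta_{\mathrm p}=(0,K,2K,\ldots,K(L-1))$; $\beta_{\mathrm s}=(KL,KL+1,\ldots,KL+T-1)$. $\operatorname{Set}(v)$ denotes the set of entries of a vector $v$, and $A+B=\{a+b: a\in A,b\in B\}$. $\mathbf{1}_P$ is $1$ if $P$ holds and $0$ otherwise. *)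

(* Defs.v *)
From mathcomp Require Import all_boot all_order all_algebra.
Set Implicit Arguments.
Unset Strict Implicit.
Unset Printing Implicit Defensive.
Import Order.TTheory GRing.Theory Num.Theory.

Definition alpha_p (K : nat) : seq nat := iota 0 K.
(* i-th entry (i < T) of alpha_s: the T smallest elements of
   {KL + j + K t : 0 <= j <= r-1, t >= 0} in increasing order, i.e.
   KL, KL+1, ..., KL+r-1, KL+K, ..., KL+K+r-1, ... *)
Definition alpha_s (K L T r : nat) : seq nat :=
  [seq K * L + i %% r + K * (i %/ r) | i <- iota 0 T].
Definition beta_p (K L : nat) : seq nat := [seq K * i | i <- iota 0 L].
Definition beta_s (K L T : nat) : seq nat := iota (K * L) T.

Definition gasp_alpha (K L T r : nat) : seq nat := alpha_p K ++ alpha_s K L T r.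
Definition gasp_beta (K L T : nat) : seq nat := beta_p K L ++ beta_s K L T.

Definition sumset (a b : seq nat) : seq nat := undup [seq x + y | x <- a, y <- b].

Local Open Scope ring_scope.

Definition gasp_N (K L T r : nat) : rat :=
  let Kq : rat := K%:R in
  let Lq : rat := L%:R in
  let Tq : rat := T%:R in
  let rq : rat := r%:R in
  let phi : rat := Tq - 1 - Kq * Lq + 2 * Kq in
  let mu : nat := ((T - 1) %% K)%N in
  let muq : rat := mu%:R in
  let x : rat := Order.min ((Tq - 1 - muq) / Kq - (mu == 0%N)%:R) (Lq - 3) in
  Kq * Lq + 2 * Kq + 3 * Tq - 2 - Order.max Kq phi
  + (Lq - 2) * Order.max 0 (Order.min rq (rq - phi))
  + ((T - 1) %/ r)%N%:R * Order.min (Tq - 1) (Kq - rq)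
  - (if phi < rq then 1 else 0) *
    ( Order.min 0 (muq - rq)
      + rq * (Tq - 1 - muq) / Kq
      + (- Kq * x ^+ 2 + (- Kq - 2 * Order.max 0 phi + 2 * Tq - 2) * x
         + Tq - 1 - muq) / 2
      - (Tq - 1 - muq) / Kq * ((Tq - 1 + muq) / 2)).

(* Main.v *)
Require Import Defs.
From mathcomp Require Import all_boot all_order all_algebra.
From mathcomp Require Import zify ring lra.
Import Order.TTheory GRing.Theory Num.Theory.


Lemma divmod_uniq d q s : s < d -> (q*d + s) %/ d = q /\ (q*d + s) %% d = s.
Proof.
move=> sd; have d0 : 0 < d by apply: leq_ltn_trans sd.
rewrite divnMDl // divn_small // addn0 modnMDl modn_small //.
Qed.

Lemma size_undup_count (s : seq nat) B :
  all (fun x => x < B) s -> size (undup s) = count (mem s) (iota 0 B).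
Proof.
move=> /allP hB; rewrite -size_filter; apply: perm_size; apply: uniq_perm.
- exact: undup_uniq.
- by rewrite filter_uniq // iota_uniq.
move=> x; rewrite mem_undup mem_filter mem_iota /= add0n.
by case hx: (x \in s) => //=; rewrite (hB x hx).
Qed.

Lemma count_lt_iota a n : count (fun j => j < a) (iota 0 n) = minn a n.
Proof.
elim: n => [|n IH]; first by rewrite /= minn0.
rewrite -addn1 iotaD count_cat IH /=; lia.
Qed.

Lemma count_block a K q s : 0 < K -> s <= K ->
  count (fun m => m %% K < a) (iota (q*K) s) = minn a s.
Proof.
move=> K0 sK; rewrite -(addn0 (q*K)) iotaDl count_map -count_lt_iota.
apply: eq_in_count => j; rewrite mem_iota add0n => /andP [_ js] /=.
by rewrite modnMDl modn_small //; apply: leq_trans js sK.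
Qed.

Lemma count_mod a K q s : 0 < K -> s <= K ->
  count (fun m => m %% K < a) (iota 0 (q*K + s)) = q * minn a K + minn a s.
Proof.
move=> K0 sK; rewrite iotaD count_cat add0n count_block //; congr (_ + _).
elim: q => [|q IH]; first by rewrite mul0n.
rewrite mulSn addnC iotaD count_cat IH add0n count_block //; lia.
Qed.


Definition inWP K T r w := exists i u, [/\ i < T, u < T & w = i %% r + K*(i %/ r) + u].
Definition Wb K T r w := (w < K*((T-1)%/r) + (T-1)%%r + T) &&
   (((T-1)%/r <= w %/ K) || (w %% K < r + T - 1)).

Lemma W_char K T r w : 0<K -> 0<r -> r<=K -> 0<T -> inWP K T r w <-> Wb K T r w.
Proof.
move=> K0 r0 rK T0.
set tl := (T-1)%/r; set rho := (T-1)%%r.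
have eT : T - 1 = tl * r + rho by rewrite /tl /rho -divn_eq.
have rhor : rho < r by rewrite /rho ltn_pmod.
split.
- move=> [i [u [iT uT ->]]].
  set a := i %% r; set b := i %/ r.
  have ei : i = b * r + a by rewrite /a /b -divn_eq.
  have ar : a < r by rewrite /a ltn_pmod.
  have btl : b <= tl by rewrite /b /tl leq_div2r //; lia.
  have hab : a + K * b <= K * tl + rho.
    case: (ltnP b tl) => hb.
      have : K * b.+1 <= K * tl by rewrite leq_mul2l hb orbT.
      lia.
    have bt : b = tl by apply/eqP; rewrite eqn_leq btl hb.
    rewrite bt; move: iT; rewrite ei bt; lia.
  apply/andP; split; first lia.
  apply/orP; right.
  have -> : a + K * b + u = b * K + (a + u) by lia.
  rewrite modnMDl; apply: leq_ltn_trans (leq_mod _ _) _; lia.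
- move=> /andP [wlt /orP hor].
  case: (ltnP (w %/ K) tl) => hq.
  + case: hor => [h|hj]; first by lia.
    set t := w %/ K; set j := w %% K.
    have ew : w = t * K + j by rewrite /t /j -divn_eq.
    have t1 : t.+1 * r <= tl * r by rewrite leq_mul2r hq orbT.
    case: (ltnP j r) => hjr.
    * exists (t * r + j), 0; have [e1 e2] := divmod_uniq _ t _ hjr.
      rewrite e1 e2; split; lia.
    * have hr1 : r - 1 < r by lia.
      exists (t * r + (r - 1)), (j - (r - 1)); have [e1 e2] := divmod_uniq _ t _ hr1.
      rewrite e1 e2; split; lia.
  + have hw : tl * K <= w by rewrite -leq_divRL.
    set d := w - K * tl.
    case: (leqP d rho) => hd.
    * have hdr : d < r by lia.
      exists (tl * r + d), 0; have [e1 e2] := divmod_uniq _ tl _ hdr.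
      rewrite e1 e2; split; lia.
    * exists (tl * r + rho), (d - rho); have [e1 e2] := divmod_uniq _ tl _ rhor.
      rewrite e1 e2; split; lia.
Qed.

Lemma W_count K T r : 0<K -> 0<r -> r<=K -> 0<T ->
  count (Wb K T r) (iota 0 (K*((T-1)%/r) + (T-1)%%r + T)) =
  (T-1)%/r * minn (r + T - 1) K + (T-1)%%r + T.
Proof.
move=> K0 r0 rK T0.
set tl := (T-1)%/r; set rho := (T-1)%%r.
rewrite -addnA iotaD count_cat add0n.
have -> : count (Wb K T r) (iota (K * tl) (rho + T)) = rho + T.
  rewrite -[RHS](size_iota (K * tl)) -count_predT; apply: eq_in_count => w.
  rewrite mem_iota => /andP [h1 h2]; rewrite /Wb /= -/tl -/rho.
  have -> : tl <= w %/ K by rewrite leq_divRL // mulnC.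
  rewrite orTb andbT; lia.
rewrite addnA; congr (_ + _).
have -> : K * tl = tl * K + 0 by lia.
have := count_mod (r + T - 1) K tl 0 K0 (leq0n K); rewrite minn0 !addn0 => <-.
congr (_ + _); apply: eq_in_count => w; rewrite mem_iota add0n => /andP [_ h2].
rewrite /Wb -/tl -/rho.
have -> : w < K * tl + rho + T by lia.
have -> : (tl <= w %/ K) = false by rewrite leq_divRL //; lia.
by [].
Qed.


Definition Pb K L T r n := [|| n < K*L + (K + T - 1),
  (n < 2*(K*L)) && ((n - K*L) %% K < r) |
  (2*(K*L) <= n) && Wb K T r (n - 2*(K*L))].

Lemma mem_alpha K L T r x : x \in gasp_alpha K L T r =
  (x < K) || has (fun i => x == K*L + i %% r + K*(i %/ r)) (iota 0 T).
Proof.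
rewrite mem_cat /alpha_p mem_iota add0n /=; congr (_ || _).
by apply/mapP/hasP => [[i hi ->]|[i hi /eqP ->]]; exists i.
Qed.

Lemma mem_beta K L T y : y \in gasp_beta K L T =
  has (fun s => y == K*s) (iota 0 L) || (K*L <= y < K*L + T).
Proof.
rewrite mem_cat /beta_s mem_iota; congr (_ || _).
by apply/mapP/hasP => [[i hi ->]|[i hi /eqP ->]]; exists i.
Qed.

Lemma mem_S K L T r n : 0<K -> 0<L -> 0<T -> L<=K -> 1<=r -> r<=minn K T ->
  (n \in [seq x + y | x <- gasp_alpha K L T r, y <- gasp_beta K L T]) = Pb K L T r n.
Proof.
move=> K0 L0 T0 LK r1 rKT.
have rK : r <= K by lia.
have rT : r <= T by lia.
have r0 : 0 < r by lia.
apply/allpairsP/idP.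
- move=> [[x y] /= [hx hy ->]].
  move: hx hy; rewrite mem_alpha mem_beta.
  move=> /orP [xK|/hasP [i hi /eqP ->]] /orP [/hasP [s hs /eqP ->]|hy].
  + move: hs; rewrite mem_iota add0n => /andP [_ sL].
    have : K * s.+1 <= K * L by rewrite leq_mul2l sL orbT.
    rewrite /Pb; lia.
  + move: hy => /andP [hy1 hy2]; rewrite /Pb; lia.
  + move: hi hs; rewrite !mem_iota !add0n => /andP [_ iT] /andP [_ sL].
    set a := i %% r; set b := i %/ r.
    have ei : i = b * r + a by rewrite /a /b -divn_eq.
    have ar : a < r by rewrite /a ltn_pmod.
    rewrite /Pb.
    case: (ltnP (K * L + a + K * b + K * s) (K * L + (K + T - 1))) => h1; first by [].
    case: (ltnP (K * L + a + K * b + K * s) (2 * (K * L))) => h2 /=.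
      have -> : K * L + a + K * b + K * s - K * L = (b + s) * K + a by lia.
      by rewrite modnMDl modn_small //; lia.
    have bsL : L <= b + s.
      rewrite leqNgt; apply/negP => hbs.
      have : K * (b + s).+1 <= K * L by rewrite leq_mul2l hbs orbT.
      lia.
    have hbl : (b + s - L) * r <= b * r by rewrite leq_mul2r; lia.
    apply/W_char => //.
    exists ((b + s - L) * r + a), 0.
    have [e1 e2] := divmod_uniq _ (b + s - L) _ ar.
    rewrite e1 e2; split; [lia|lia|].
    have : K * (b + s - L) + K * L = K * b + K * s.
      by rewrite -mulnDr subnK // mulnDr.
    lia.
  + move: hi hy; rewrite mem_iota add0n => /andP [_ iT] /andP [hy1 hy2].
    rewrite /Pb; apply/orP; right; apply/orP; right.
    apply/andP; split; first by move: (i %% r) (i %/ r) => z1 z2; lia.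

    apply/W_char => //; exists i, (y - K * L); split; [lia|lia|move: (i %% r) (i %/ r) => z1 z2; lia].
- rewrite /Pb => /orP [h1|/orP [/andP [h2 h3]|/andP [h4 h5]]].
  + case: (ltnP n (K * L)) => hn.
    * exists (n %% K, K * (n %/ K)); rewrite /= mem_alpha mem_beta ltn_pmod //.
      split => //; last by rewrite addnC mulnC -divn_eq.
      apply/orP; left; apply/hasP; exists (n %/ K) => //.
      by rewrite mem_iota add0n ltn_divLR // mulnC.
    * case: (ltnP n (K * L + T)) => hn2.
        exists (0, n); rewrite /= mem_alpha mem_beta K0; split => //.
        by apply/orP; right; apply/andP.
      exists (n - (K * L + T - 1), K * L + T - 1); rewrite /= mem_alpha mem_beta.
      split; [apply/orP; left; lia | apply/orP; right; apply/andP; lia | lia].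
  + case: (ltnP n (K * L + (K + T - 1))) => h1.
      case: (ltnP n (K * L)) => hn.
      * exists (n %% K, K * (n %/ K)); rewrite /= mem_alpha mem_beta ltn_pmod //.
        split => //; last by rewrite addnC mulnC -divn_eq.
        apply/orP; left; apply/hasP; exists (n %/ K) => //.
        by rewrite mem_iota add0n ltn_divLR // mulnC.
      * case: (ltnP n (K * L + T)) => hn2.
          exists (0, n); rewrite /= mem_alpha mem_beta K0; split => //.
          by apply/orP; right; apply/andP.
        exists (n - (K * L + T - 1), K * L + T - 1); rewrite /= mem_alpha mem_beta.
        split; [apply/orP; left; lia | apply/orP; right; apply/andP; lia | lia].
    set m := n - K * L.
    set j := m %% K; set t := m %/ K.
    have em : m = t * K + j by rewrite /t /j -divn_eq.
    have tL : t < L by rewrite /t ltn_divLR //; lia.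
    have em0 : m = n - K * L by [].
    have ejr : j < r by [].
    clearbody m j t.
    exists (K * L + j, K * t); rewrite /= mem_alpha mem_beta; split.
    * apply/orP; right; apply/hasP; exists j; first by rewrite mem_iota; lia.
      by rewrite modn_small // divn_small // muln0 addn0.
    * by apply/orP; left; apply/hasP; exists t => //; rewrite mem_iota; lia.
    * clear h3; move: n h1 h2 em0 => n h1 h2 em0; change nat in n; lia.
  + move/W_char: h5 => /(_ K0 r0 rK T0) [i [u [iT uT ew]]].
    exists (K * L + i %% r + K * (i %/ r), K * L + u); rewrite /= mem_alpha mem_beta; split.
    * by apply/orP; right; apply/hasP; exists i => //; rewrite mem_iota.
    * by apply/orP; right; apply/andP; lia.
    * lia.
Qed.


Lemma count_main K L T r : 0<K -> 0<L -> 0<T -> L<=K -> 1<=r -> r<=minn K T ->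
  size (sumset (gasp_alpha K L T r) (gasp_beta K L T)) +
  (if K + T - 1 < K * L then count (fun m => m %% K < r) (iota 0 (K + T - 1)) else 0)
  = (if K + T - 1 < K * L then K * L + (K + T - 1) + L * r else 2 * (K * L)) +
    ((T-1)%/r * minn (r + T - 1) K + (T-1)%%r + T).
Proof.
move=> K0 L0 T0 LK r1 rKT.
have rK : r <= K by lia.
have rT : r <= T by lia.
have r0 : 0 < r by lia.
set wmax := K*((T-1)%/r) + (T-1)%%r + T.
have hwT : T <= wmax by rewrite /wmax; move: (_ %/ r) (_ %% r) => z1 z2; lia.
have KKL : K <= K * L by rewrite leq_pmulr.
rewrite /sumset (size_undup_count _ (K * L + K * L + wmax)); last first.
  apply/allP => n; rewrite mem_S // /Pb /Wb -/wmax.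
  clearbody wmax; change nat in n; case/or3P => [h|/andP [h _]|/and3P [h1 h2 _]]; lia.
have -> : count (mem [seq x + y | x <- gasp_alpha K L T r, y <- gasp_beta K L T])
   (iota 0 (K * L + K * L + wmax)) = count (Pb K L T r) (iota 0 (K * L + K * L + wmax)).
  by apply: eq_count => n; rewrite /= mem_S.
rewrite iotaD count_cat iotaD count_cat !add0n.
have -> : count (Pb K L T r) (iota 0 (K * L)) = K * L.
  rewrite -[RHS](size_iota 0) -count_predT; apply: eq_in_count => n.
  rewrite mem_iota /Pb => /andP [_ h]; apply/orP; left; lia.
have -> : count (Pb K L T r) (iota (K * L + K * L) wmax) =
   (T-1)%/r * minn (r + T - 1) K + (T-1)%%r + T.
  rewrite -W_count // -/wmax -(addn0 (K * L + K * L)) iotaDl count_map.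
  apply: eq_in_count => w; rewrite mem_iota add0n => /andP [_ hw] /=.
  rewrite /Pb.
  have -> : K * L + K * L + w - 2 * (K * L) = w by lia.
  have -> : (K * L + K * L + w < 2 * (K * L)) = false by lia.
  have -> : 2 * (K * L) <= K * L + K * L + w by lia.
  rewrite /=; case: (ltnP (K * L + K * L + w) (K * L + (K + T - 1))) => h //=.
  symmetry; rewrite /Wb -/wmax hw /=; apply/orP; right; change nat in w.
  apply: leq_ltn_trans (leq_mod _ _) _; lia.
have -> : count (Pb K L T r) (iota (0 + K * L) (K * L)) =
   count (fun m => (m < K + T - 1) || (m %% K < r)) (iota 0 (K * L)).
  rewrite add0n -(addn0 (K * L)) iotaDl count_map.
  apply: eq_in_count => m; rewrite mem_iota add0n => /andP [_ hm] /=.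
  rewrite /Pb.
  have -> : K * L + m - K * L = m by lia.
  have -> : (K * L + m < 2 * (K * L)) = true by lia.
  have -> : (2 * (K * L) <= K * L + m) = false by lia.
  by rewrite ltn_add2l /= orbF.
case: ltnP => hc.
- rewrite -(subnKC (ltnW hc)) iotaD count_cat add0n.
  have -> : count (fun m => (m < K + T - 1) || (m %% K < r)) (iota 0 (K + T - 1)) = K + T - 1.
    rewrite -[RHS](size_iota 0) -count_predT; apply: eq_in_count => n.
    by rewrite mem_iota add0n => /andP [_ ->].
  have -> : count (fun m => (m < K + T - 1) || (m %% K < r))
      (iota (K + T - 1) (K * L - (K + T - 1))) =
      count (fun m => m %% K < r) (iota (K + T - 1) (K * L - (K + T - 1))).
    apply: eq_in_count => n; rewrite mem_iota => /andP [h _].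
    by rewrite ltnNge h.
  have := count_mod r K L 0 K0 (leq0n K).
  rewrite addn0 minn0 addn0 (minn_idPl rK) [L * K]mulnC.
  rewrite -{1}(subnKC (ltnW hc)) iotaD count_cat add0n => <-.
  lia.
- rewrite addn0.
  have -> : count (fun m => (m < K + T - 1) || (m %% K < r)) (iota 0 (K * L)) = K * L.
    rewrite -[RHS](size_iota 0) -count_predT; apply: eq_in_count => n.
    rewrite mem_iota add0n => /andP [_ h]; apply/orP; left; lia.
  lia.
Qed.


Lemma caseIIa K L T q mu r : 0 < K -> mu < K -> T - 1 = q * K + mu -> 0 < T ->
  K + T - 1 < K * L -> r + K * L + 1 <= T + 2 * K -> L = q + 2 /\ r <= mu.
Proof.
move=> K0 muK eT T0 h1 h2.
have a1 : K * (q + 1) < K * L by lia.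
have a2 : K * L < K * (q + 3) by lia.
rewrite ltn_pmul2l // in a1; rewrite ltn_pmul2l // in a2.
have eL : L = q + 2 by lia.
split => //; subst L; lia.
Qed.

Lemma caseIIb1 K L T q mu : 0 < K -> mu < K -> T - 1 = q * K + mu -> 0 < T ->
  T + 2 * K <= K * L + 1 -> q + 2 <= L /\ (0 < mu -> q + 3 <= L).
Proof.
move=> K0 muK eT T0 h1.
have a1 : K * (q + 2) <= K * L by lia.
rewrite leq_pmul2l // in a1.
split => // mu0.
have a2 : K * (q + 2) < K * L by lia.
rewrite ltn_pmul2l // in a2; lia.
Qed.

Lemma caseIIb2 K L T q mu r : 0 < K -> mu < K -> T - 1 = q * K + mu -> 0 < T ->
  K + T - 1 < K * L -> K * L + 2 <= T + 2 * K -> T + 2 * K < r + K * L + 1 ->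
  L = q + 2 /\ 0 < mu < r.
Proof.
move=> K0 muK eT T0 h1 h2 h3.
have a1 : K * (q + 1) < K * L by lia.
have a2 : K * L < K * (q + 3) by lia.
rewrite ltn_pmul2l // in a1; rewrite ltn_pmul2l // in a2.
have eL : L = q + 2 by lia.
split => //; subst L; lia.
Qed.

Local Open Scope ring_scope.

Lemma solve_l (x a b : rat) : x + a = b -> x = b - a.
Proof. by move=> <-; rewrite addrK. Qed.

Theorem theorem1 (K L T r : nat) :
  (0 < K)%N -> (0 < L)%N -> (0 < T)%N -> (L <= K)%N ->
  (1 <= r)%N -> (r <= minn K T)%N ->
  (size (sumset (gasp_alpha K L T r) (gasp_beta K L T)))%:R = gasp_N K L T r.
Proof.
move=> K0 L0 T0 LK r1 rKT.
have CM := count_main K L T r K0 L0 T0 LK r1 rKT.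
rewrite /gasp_N.
move: CM.
set Nn := size _.
set q := ((T-1) %/ K)%N; set mu := ((T-1) %% K)%N.
set tl := ((T-1) %/ r)%N; set rho := ((T-1) %% r)%N.
have eTK : (T - 1 = q * K + mu)%N by rewrite /q /mu -divn_eq.
have eTr : (T - 1 = tl * r + rho)%N by rewrite /tl /rho -divn_eq.
have muK : (mu < K)%N by rewrite /mu ltn_pmod.
have rK : (r <= K)%N by lia.
have rT : (r <= T)%N by lia.
set mn := minn (T-1) (K-r).
have emin : (minn (r + T - 1) K = r + mn)%N by rewrite /mn; lia.
rewrite emin.
have Cc : count (fun m => m %% K < r)%N (iota 0 (K + T - 1)) = ((q+1)*r + minn r mu)%N.
  have -> : (K + T - 1 = (q+1)*K + mu)%N by lia.
  by rewrite count_mod // ?(minn_idPl rK) //; lia.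
rewrite Cc => CM.
clearbody Nn q mu tl rho.
have eT : T%:R = q%:R * K%:R + mu%:R + 1 :> rat.
  have -> : T = (q * K + mu + 1)%N by lia.
  by rewrite natrD natrD natrM.
have Kq0 : K%:R != 0 :> rat by rewrite pnatr_eq0 -lt0n.
have Kqp : 0 < K%:R :> rat by rewrite ltr0n.
have qdiv : (T%:R - 1 - mu%:R) / K%:R = q%:R :> rat.
  by rewrite eT; field.
have mnR : Order.min (T%:R - 1) (K%:R - r%:R) = mn%:R :> rat.
  have eT1 : T%:R - 1 = (T - 1)%N%:R :> rat by rewrite natrB // .
  have eKr : K%:R - r%:R = (K - r)%N%:R :> rat by rewrite natrB.
  rewrite eT1 eKr /mn; case: (leqP (T-1) (K-r)) => h.
    rewrite min_l; last by rewrite ler_nat.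
    by apply/eqP; rewrite eqr_nat; apply/eqP; lia.
  rewrite min_r; last by rewrite ler_nat ltnW.
  by apply/eqP; rewrite eqr_nat; apply/eqP; lia.
clearbody mn.
rewrite qdiv mnR -[r%:R * _ / K%:R]mulrA qdiv.
have rKq : r%:R <= K%:R :> rat by rewrite ler_nat.
have r0q : 0 < r%:R :> rat by rewrite ltr0n.
set phi := T%:R - 1 - K%:R * L%:R + 2 * K%:R.
have ephi : phi = T%:R - 1 - K%:R * L%:R + 2 * K%:R by [].
clearbody phi.
case: (ltnP (K + T - 1) (K * L)) => hc in CM *.
- have eNn : (Nn + (q + 1) * r + minn r mu + 2 = K * L + K + L * r + tl * mn + 3 * T)%N.
    rewrite mulnDr in CM; lia.
  have hcq : ((K + T + 1)%N%:R <= (K * L + 1)%N%:R :> rat) by rewrite ler_nat; lia.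
  rewrite !natrD natrM in hcq.
  rewrite max_l; last lra.
  case: (lerP r%:R phi) => hp.
  + have hpn : (r + K * L + 1 <= T + 2 * K)%N.
      by rewrite -(ler_nat rat) !natrD !natrM; lra.
    have [eL rmu] := caseIIa K L T q mu r K0 muK eTK T0 hc hpn.
    have eNn2 : (Nn + 2 = K * L + K + tl * mn + 3 * T)%N.
      have : (L * r = (q + 1) * r + r)%N by rewrite eL; lia.
      move: eNn; rewrite (minn_idPl rmu); lia.
    have := congr1 (fun n => n%:R : rat) eNn2; rewrite /= !natrD !natrM => eN.
    rewrite min_r; last lra.
    rewrite max_l; last lra.
    rewrite mul0r mulr0 subr0 addr0.
    lra.
  + rewrite /= mul1r.
    have eNg : (Nn + ((q + 1) * r + minn r mu + 2) = K * L + K + L * r + tl * mn + 3 * T)%N by lia.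
    case: (lerP phi 0) => hp0.
    * rewrite [Num.min r%:R _]min_l; last lra.
      rewrite [Num.max 0 r%:R]max_r; last lra.
      have hpn : (T + 2 * K <= K * L + 1)%N.
        by rewrite -(ler_nat rat) !natrD !natrM; lra.
      have [hq2 hq3] := caseIIb1 K L T q mu K0 muK eTK T0 hpn.
      have hq2r : (q + 2)%N%:R <= L%:R :> rat by rewrite ler_nat.
      rewrite natrD in hq2r.
      case: (posnP mu) => hmu.
      - rewrite hmu minn0 in eNg; rewrite hmu /= in eT *.
        rewrite [Num.min (q%:R - 1) _]min_l; last lra.
        rewrite [Num.min 0 _]min_r; last lra.
        have := congr1 (fun n => n%:R : rat) eNg; rewrite natrD => /solve_l eNr.
        rewrite eNr !natrD !natrM eT.
        by field.
      - have hq3' := hq3 hmu.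
        have hq3r : (q + 3)%N%:R <= L%:R :> rat by rewrite ler_nat.
        rewrite natrD in hq3r.
        case: (mu =P 0%N) => [hm0|_]; first by move: hmu; rewrite hm0.
        have -> : (false%:R : rat) = 0 by [].
        rewrite subr0 [Num.min q%:R _]min_l; last lra.
        case: (leqP mu r) => hmr.
        + rewrite (minn_idPr hmr) in eNg.
          have hmrq : mu%:R <= r%:R :> rat by rewrite ler_nat.
          rewrite [Num.min 0 _]min_r; last lra.
          have := congr1 (fun n => n%:R : rat) eNg; rewrite natrD => /solve_l eNr.
          rewrite eNr !natrD !natrM eT.
          by field.
        + rewrite (minn_idPl (ltnW hmr)) in eNg.
          have hmrq : r%:R < mu%:R :> rat by rewrite ltr_nat.
          rewrite [Num.min 0 _]min_l; last lra.
          have := congr1 (fun n => n%:R : rat) eNg; rewrite natrD => /solve_l eNr.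
          rewrite eNr !natrD !natrM eT.
          by field.
    * have hpn1 : (K * L + 2 <= T + 2 * K)%N.
        have : ((K * L + 1)%N%:R < (T + 2 * K)%N%:R :> rat) by rewrite !natrD !natrM; lra.
        by rewrite ltr_nat; lia.
      have hpn2 : (T + 2 * K < r + K * L + 1)%N.
        by rewrite -(ltr_nat rat) !natrD !natrM; lra.
      have [eL /andP [mu0 mur]] := caseIIb2 K L T q mu r K0 muK eTK T0 hc hpn1 hpn2.
      rewrite (minn_idPr (ltnW mur)) in eNg.
      have eLq : L%:R = q%:R + 2 :> rat by rewrite eL natrD.
      have mu0q : 0 < mu%:R :> rat by rewrite ltr0n.
      have murq : mu%:R < r%:R :> rat by rewrite ltr_nat.
      have ephi2 : phi = mu%:R by rewrite ephi eT eLq; ring.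
      rewrite ephi2; case: (mu =P 0%N) => [hm0|_]; first by move: mu0; rewrite hm0.
      have -> : (false%:R : rat) = 0 by [].
      rewrite subr0.
      rewrite [Num.min r%:R _]min_r; last lra.
      rewrite [Num.max 0 _]max_r; last lra.
      rewrite [Num.min q%:R _]min_r; last lra.
      rewrite [Num.min 0 _]min_r; last lra.
      have := congr1 (fun n => n%:R : rat) eNg; rewrite natrD => /solve_l eNr.
      rewrite eNr !natrD !natrM eT eLq.
      by field.
- have eNn : (Nn + 1 = 2 * (K * L) + tl * mn + 2 * T)%N.
    rewrite mulnDr in CM; lia.
  have := congr1 (fun n => n%:R : rat) eNn; rewrite /= !natrD !natrM => eN.
  have hcq : ((K * L + 1)%N%:R <= (K + T)%N%:R :> rat) by rewrite ler_nat; lia.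
  rewrite !natrD natrM in hcq.
  rewrite max_r; last lra.
  have -> : (phi < r%:R) = false by apply/negbTE; rewrite -leNgt; lra.
  rewrite min_r; last lra.
  rewrite max_l; last lra.
  rewrite mul0r mulr0 subr0 addr0.
  lra.
Qed.
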